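(* Let $k\ge 2$ and let $N$ be a power of two. Let $A_1,\dots,A_k$ be integer sequences, each split into $N$ blocks $A_i=\alpha_i^0\alpha_i^1\cdots\alpha_i^{N-1}$, such that for all $j_1,\dots,j_k\in\{0,\dots,N-1\}$, $\mathrm{lcis}(\alpha_1^0\cdots\alpha_1^{j_1},\dots,\alpha_k^0\cdots\alpha_k^{j_k})=j_1+\cdots+j_k+N$. Let $s$ be the largest element appearing in $A_1,\dots,A_k$. For $i\in\{1,\dots,k\}$ let $T_i^0$ be the increasingly sorted sequence of all numbers $2s+x$ with $x\in\{1,\dots,2^k-1\}$ whose $i$-th bit in binary representation is $0$, and $T_i^1$ the increasingly sorted sequence of those with $i$-th bit equal to $1$. Define $B_i=\beta_i^0\cdots\beta_i^{2N-1}$ by $\beta_i^{2j}=\mathrm{inflate}(\alpha_i^j)\circ T_i^0$ and $\beta_i^{2j+1}=T_i^1$ for $j\in\{0,\dots,N-1\}$. Then for all $j_1,\dots,j_k\in\{0,1,\dots,2N-1\}$, $$\mathrm{lcis}(\beta_1^0\cdots\beta_1^{j_1},\beta_2^0\cdots\beta_2^{j_2},\dots,\beta_k^0\cdots\beta_k^{j_k})=j_1+j_2+\cdots+j_k+2N.$$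
   Context: $\mathrm{lcis}(X_1,\dots,X_k)$ denotes the length of the longest strictly increasing sequence that is a subsequence of every $X_i$. For $A=\langle a_0,\dots,a_{n-1}\rangle$, $\mathrm{inflate}(A)=\langle 2a_0-1,2a_0,\dots,2a_{n-1}-1,2a_{n-1}\rangle$; $\circ$ and juxtaposition denote concatenation. *)

(* Defs.v *)
From mathcomp Require Import all_boot all_order all_algebra.
Set Implicit Arguments. Unset Strict Implicit. Unset Printing Implicit Defensive.
Import Order.TTheory GRing.Theory Num.Theory.
Local Open Scope ring_scope.

Definition common_incr_subseq (Xs : seq (seq int)) (s : seq int) : Prop :=
  sorted (fun a b : int => a < b) s /\ all (fun X => subseq s X) Xs.

Definition lcis_is (Xs : seq (seq int)) (n : nat) : Prop :=
  (exists s, common_incr_subseq Xs s /\ size s = n) /\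
  (forall s, common_incr_subseq Xs s -> (size s <= n)%N).

Definition inflate (A : seq int) : seq int :=
  flatten [seq [:: 2 * a - 1; 2 * a] | a <- A].

Definition prefix_blocks (blk : nat -> seq int) (j : nat) : seq int :=
  flatten [seq blk l | l <- iota 0 j.+1].

(* T_i^b : increasing sequence of 2s+x, x in {1..2^k-1}, whose i-th bit
   (i : 'I_k, 0-indexed from the least significant bit) equals b *)
Definition Tseq (k : nat) (s : int) (i : nat) (b : bool) : seq int :=
  [seq 2 * s + (x%:Z) | x <- iota 1 (2 ^ k - 1)%N & odd (x %/ 2 ^ i) == b].

Definition beta (k : nat) (s : int) (alpha : nat -> seq int) (i : nat) (j : nat)
  : seq int :=
  if odd j then Tseq k s i true else inflate (alpha j./2) ++ Tseq k s i false.

(* Main.v *)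
Require Import Defs.
From mathcomp Require Import all_boot all_order all_algebra.
From mathcomp Require Import zify.
Import Order.TTheory GRing.Theory Num.Theory.
Set Implicit Arguments. Unset Strict Implicit.

Lemma subseq_catP (T : eqType) (u w s : seq T) :
  subseq s (u ++ w) -> exists s1 s2, s = s1 ++ s2 /\ subseq s1 u /\ subseq s2 w.
Proof.
elim: u s => [|x u IH] s /=; first by move=> H; exists [::], s.
case: s => [|y s] /=; first by move=> _; exists [::], [::]; rewrite !sub0seq.
case: (y =P x) => [-> H|ne H].
  have [s1 [s2 [-> [H1 H2]]]] := IH _ H.
  by exists (x :: s1), s2; rewrite /= eqxx.
have [s1 [s2 [E [H1 H2]]]] := IH _ H.
exists s1, s2; split => //; split => //.
exact: subseq_trans H1 (subseq_cons _ _).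
Qed.

Lemma cat_eq_split (T : eqType) (a b c d : seq T) : a ++ b = c ++ d ->
  (exists e, c = a ++ e /\ b = e ++ d) \/
  (exists e, e != [::] /\ a = c ++ e /\ d = e ++ b).
Proof.
elim: a c => [|x a IH] c /=; first by move=> ->; left; exists c.
case: c => [|y c] /= E; first by right; exists (x :: a); rewrite -E.
case: E => -> /IH [[e [-> ->]]|[e [ne [-> ->]]]].
  by left; exists e.
by right; exists e.
Qed.

Lemma filter_all_nil (T : Type) (p : pred T) (s : seq T) :
  all (predC p) s -> filter p s = [::].
Proof. by elim: s => //= x s IH /andP[/negbTE -> /IH]. Qed.

Lemma subseq_split_lh (T : eqType) (p : pred T) (l h u w : seq T) :
  all p l -> all (predC p) h -> all p u -> all (predC p) w ->
  subseq (l ++ h) (u ++ w) -> subseq l u /\ subseq h w.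
Proof.
move=> Hl Hh Hu Hw H; split.
  have : subseq l (filter p (u ++ w)).
    by rewrite subseq_filter Hl (subseq_trans (prefix_subseq _ _) H).
  by rewrite filter_cat (all_filterP Hu) filter_all_nil ?cats0.
have : subseq h (filter (predC p) (u ++ w)).
  by rewrite subseq_filter Hh (subseq_trans (suffix_subseq _ _) H).
rewrite filter_cat (all_filterP Hw) filter_all_nil //.
by apply/allP => x /(allP Hu) /=; rewrite negbK.
Qed.

Definition bitn (i x : nat) : bool := odd (x %/ 2 ^ i).
Definition Tn (k i : nat) (b : bool) : seq nat :=
  [seq x <- iota 1 (2 ^ k - 1) | odd (x %/ 2 ^ i) == b].
Fixpoint chgn (i p : nat) (X : seq nat) : nat :=
  if X is y :: X' then (bitn i p != bitn i y) + chgn i y X' else 0.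
Fixpoint chgb (b : bool) (bs : seq bool) : nat :=
  if bs is c :: bs' then (b != c) + chgb c bs' else 0.

Lemma chgn_cat i p X Y : chgn i p (X ++ Y) = chgn i p X + chgn i (last p X) Y.
Proof. by elim: X p => //= y X IH p; rewrite IH addnA. Qed.

Lemma chgb_tri b c bs : chgb b bs <= (b != c) + chgb c bs.
Proof. case: bs => [|d bs] /=; first exact: leq0n.
by rewrite addnA leq_add2r; case: b; case: c; case: d. Qed.

Lemma chgn_const i p X c : all (fun x => bitn i x == c) X ->
  chgn i p X <= (bitn i p != c) /\ (X != [::] -> bitn i (last p X) = c).
Proof.
elim: X p => [|y X IH] p /=; first by split.
case/andP => /eqP Hy HX; have [H1 H2] := IH y HX.
split; last first.
  by move=> _; case: X {IH H1} HX H2 => //= z X _ ->.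
case: X {IH} HX H1 H2 => [|z X] _ H1 H2 /=; first by rewrite Hy addn0.
by move: H1 => /=; rewrite Hy eqxx leqn0 => /eqP ->; rewrite addn0.
Qed.

Lemma chgn_Tn k i bs p X : subseq X (flatten [seq Tn k i b | b <- bs]) ->
  chgn i p X <= chgb (bitn i p) bs.
Proof.
elim: bs p X => [|c bs IH] p X /=; first by move/eqP ->.
case/subseq_catP => X1 [X2 [-> [H1 H2]]].
have HX1 : all (fun x => bitn i x == c) X1.
  apply/allP => x /(mem_subseq H1); rewrite mem_filter => /andP[+ _].
  by rewrite /bitn.
have [C1 C2] := chgn_const p HX1.
rewrite chgn_cat.
case: X1 H1 HX1 C1 C2 => [|y X1] H1 HX1 C1 C2 /=.
  by rewrite add0n (leq_trans (IH _ _ H2)) // chgb_tri.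
apply: leq_add => //; rewrite -(C2 isT); exact: IH.
Qed.

Lemma chgb_alt n a : chgb (odd a) [seq odd q | q <- iota a.+1 n] = n.
Proof.
elim: n a => [|n IH] a //=; move: (IH a.+1) => /= ->.
by case: (odd a).
Qed.

Lemma chgb_alt0 m n : chgb false [seq odd q | q <- iota (2 * m) n.+1] = n.
Proof.
rewrite /= -{1}(odd_double m) -mul2n chgb_alt.
by rewrite mul2n odd_double.
Qed.

Lemma bit_diff k a b : a < 2 ^ k -> b < 2 ^ k -> a != b ->
  exists i : 'I_k, bitn i a != bitn i b.
Proof.
elim: k a b => [|k IH] a b.
  by rewrite expn0 !ltnS !leqn0 => /eqP -> /eqP ->.
move=> Ha Hb Hab.
case E: (odd a == odd b); last first.
  exists ord0; by rewrite /bitn /= expn0 !divn1 E.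
have H2 : a./2 != b./2.
  apply: contra Hab => /eqP E2.
  by rewrite -(odd_double_half a) -(odd_double_half b) E2 (eqP E).
have Ha2 : a./2 < 2 ^ k by rewrite -divn2 ltn_divLR // -expnSr.
have Hb2 : b./2 < 2 ^ k by rewrite -divn2 ltn_divLR // -expnSr.
have [i Hi] := IH _ _ Ha2 Hb2 H2.
exists (lift ord0 i).
rewrite /bitn lift0 /= expnS !divnMA !divn2; exact: Hi.
Qed.

Lemma size_le_chg k p X : path ltn p X -> all (fun x => x < 2 ^ k) (p :: X) ->
  size X <= \sum_(i < k) chgn i p X.
Proof.
elim: X p => [|y X IH] p //= /andP[Hpy HP] /and3P[Hp Hy HX].
rewrite big_split /= -addn1 addnC leq_add //; last first.
  by apply: IH => //=; rewrite Hy.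
have [i Hi] := bit_diff Hp Hy (negbT (ltn_eqF Hpy)).
by rewrite (bigD1 i) //= Hi.
Qed.

Fixpoint xs (r : nat -> bool) (n : nat) : nat :=
  if n is n'.+1 then r n' * 2 ^ n' + xs r n' else 0.

Lemma xs_lt (r : nat -> bool) n : xs r n < 2 ^ n.
Proof.
elim: n => //= n IH; rewrite expnS mul2n -addnn.
by case: (r n); rewrite ?mul1n ?mul0n ?add0n ?ltn_add2l // (leq_trans IH) ?leq_addr.
Qed.

Lemma xs_ge (r : nat -> bool) t : r t -> 2 ^ t <= xs r t.+1.
Proof. by move=> /= ->; rewrite mul1n leq_addr. Qed.

Lemma xs_mono (r : nat -> bool) m n : m <= n -> xs r m <= xs r n.
Proof.
move/subnK => <-; elim: (n - m) => //= d IH.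
by rewrite ?addSn /= (leq_trans IH) // leq_addl.
Qed.

Lemma bit_xs (r : nat -> bool) n i : bitn i (xs r n) = (i < n) && r i.
Proof.
elim: n => [|n IH] /=; first by rewrite /bitn div0n.
case: (ltngtP i n) => Hin.
- rewrite (leqW Hin) /=; move: IH; rewrite Hin /= => <-; rewrite /bitn.
  rewrite -(subnK (ltnW Hin)) expnD mulnA divnMDl ?expn_gt0 //.
  rewrite oddD oddM oddX subn_eq0 leqNgt Hin /= andbF //.
- rewrite ltnS leqNgt Hin /= /bitn divn_small //.
  apply: (leq_trans _ (leq_pexp2l _ Hin)) => //.
  rewrite expnS mul2n -addnn.
  case: (r n); rewrite ?mul1n ?mul0n ?add0n ?ltn_add2l ?xs_lt //.
  by rewrite (leq_trans (xs_lt r n)) ?leq_addr.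
- subst i; rewrite ltnSn /= /bitn divnMDl ?expn_gt0 // divn_small ?xs_lt //.
  by rewrite addn0; case: (r n).
Qed.

Local Open Scope ring_scope.

Lemma inflate_cons (a : int) c : inflate (a :: c) = 2 * a - 1 :: 2 * a :: inflate c.
Proof. by []. Qed.

Lemma inflate_cat (u w : seq int) : inflate (u ++ w) = inflate u ++ inflate w.
Proof. by rewrite /inflate map_cat flatten_cat. Qed.

Lemma inflate_subseq (u w : seq int) : subseq u w -> subseq (inflate u) (inflate w).
Proof.
elim: w u => [|x w IH] u; first by rewrite subseq0 => /eqP ->.
case: u => [|y u]; first by rewrite sub0seq.
move=> H; rewrite /= in H.
case: eqP H => [-> H|ne H].
  by rewrite !inflate_cons /= !eqxx; exact: IH.
apply: subseq_trans (IH _ H) _; rewrite inflate_cons.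
exact: (suffix_subseq [:: 2 * x - 1; 2 * x]).
Qed.

Lemma path_inflate (p : int) c : path <%R p c -> path <%R (2 * p) (inflate c).
Proof.
elim: c p => [|a c IH] p //.
rewrite inflate_cons /= => /andP[Hpa Hc].
apply/and3P; split; [lia|lia|exact: IH].
Qed.

Lemma sorted_inflate (c : seq int) : sorted <%R c -> sorted <%R (inflate c).
Proof.
case: c => [|a c] // Hc; rewrite inflate_cons /=.
apply/andP; split; [lia|exact: path_inflate].
Qed.

Lemma all_inflate (P : pred int) c :
  all P (inflate c) = all (fun a => P (2 * a - 1) && P (2 * a)) c.
Proof. by elim: c => // a c IH; rewrite inflate_cons /= IH andbA. Qed.

Definition hf (v : int) : int := divz (v + 1) 2.
Arguments hf : simpl never.

Lemma undup_hf_subseq (X l : seq int) : sorted <%R l -> subseq l (inflate X) ->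
  subseq (undup (map hf l)) X.
Proof.
elim: X l => [|x X IH] l Hs.
  by rewrite (_ : inflate [::] = [::]) // subseq0 => /eqP ->.
case: l Hs => [|a l] Hs; first by rewrite sub0seq.
have Hall : all (fun v => a < v) l.
  by apply: order_path_min => //; exact: lt_trans.
have Hsl : sorted <%R l := path_sorted Hs.
have fin : forall l', subseq l' (inflate X) -> sorted <%R l' ->
    all (fun v => 2 * x + 1 <= v) l' -> hf a = x ->
    subseq (undup (map hf (a :: l'))) (x :: X).
  move=> l' H1 H2 H3 H4.
  have Hn : x \notin map hf l'.
    apply/mapP => -[v /(allP H3) Hv] E.
    move: Hv; rewrite E /hf; lia.
  by rewrite /= H4 (negbTE Hn) /= eqxx; exact: IH.
rewrite inflate_cons => H.
have [Ea|Na] := eqVneq a (2 * x - 1).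
  have hfa : hf a = x by rewrite Ea /hf; lia.
  rewrite /= Ea eqxx in H.
  case: l Hs Hall Hsl H => [|b l] Hs Hall Hsl H.
    by rewrite /= hfa /= eqxx sub0seq.
  have [Eb|Nb] := eqVneq b (2 * x).
    rewrite /= Eb eqxx in H.
    have Hl : all (fun v => 2 * x + 1 <= v) l.
      move: Hsl => /= /(order_path_min lt_trans) /allP Hb.
      by apply/allP => v /Hb; rewrite Eb; lia.
    have Hsl' := path_sorted Hsl.
    have hfb : hf b = x by rewrite Eb /hf; lia.
    have -> : undup (map hf [:: a, b & l]) = undup (map hf (a :: l)).
      by rewrite /= hfa hfb mem_head.
    exact: fin.
  rewrite /= (negbTE Nb) in H.
  apply: fin => //.
    apply/allP => v; rewrite inE => /orP[/eqP ->|Hv].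
      by move: Hall => /= /andP[Hab _]; move: Hab Nb; rewrite Ea; lia.
    move: Hall => /= /andP[Hab _].
    move: Hsl => /= /(order_path_min lt_trans) /allP /(_ v Hv).
    by move: Hab Nb; rewrite Ea; lia.
rewrite /= (negbTE Na) in H.
have [Eb|Nb] := eqVneq a (2 * x).
  rewrite Eb eqxx in H.
  have hfa : hf a = x by rewrite Eb /hf; lia.
  apply: fin => //.
  by apply/allP => v /(allP Hall); rewrite Eb; lia.
rewrite (negbTE Nb) in H.
exact: subseq_trans (IH _ Hs H) (subseq_cons _ _).
Qed.

Lemma sorted_hf (l : seq int) : sorted <%R l -> sorted <%R (undup (map hf l)).
Proof.
move=> Hl; rewrite lt_sorted_uniq_le undup_uniq /=.
apply: subseq_le_sorted (undup_subseq _) _.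
apply: (homo_sorted (e := <%R)) => // u v Huv; rewrite /hf; lia.
Qed.

Lemma sumn_map_le (T : Type) (f : T -> nat) (c : nat) (s : seq T) :
  (forall x, f x <= c)%N -> (sumn (map f s) <= c * size s)%N.
Proof.
move=> H; elim: s => [|x s IH] /=; first by rewrite muln0.
by rewrite mulnS leq_add.
Qed.

Lemma size_hf (l : seq int) : sorted <%R l ->
  (size l <= 2 * size (undup (map hf l)))%N.
Proof.
move=> Hl; have Hu : uniq l by move: Hl; rewrite lt_sorted_uniq_le => /andP[].
rewrite -(size_map hf) -(perm_size (perm_count_undup (map hf l))).
rewrite size_flatten /shape -map_comp.
apply: sumn_map_le => v /=; rewrite size_nseq count_map -size_filter.
apply: (leq_trans (uniq_leq_size (s2 := [:: 2 * v - 1; 2 * v]) _ _)) => //.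
  exact: filter_uniq.
move=> u; rewrite mem_filter /= !inE => /andP[/eqP E _].
move: E; rewrite /hf => E; apply/orP.
have : (u == 2 * v - 1) || (u == 2 * v) by apply/orP; lia.
by case/orP => ->; auto.
Qed.
Local Open Scope ring_scope.

Lemma pb_S (blk : nat -> seq int) j :
  prefix_blocks blk j.+1 = prefix_blocks blk j ++ blk j.+1.
Proof.
by rewrite /prefix_blocks -addn1 iotaD map_cat flatten_cat /= cats0 add0n.
Qed.

Lemma pb_0 (blk : nat -> seq int) : prefix_blocks blk 0 = blk 0.
Proof. by rewrite /prefix_blocks /= cats0. Qed.

Lemma pb_mono (blk : nat -> seq int) m n : (m <= n)%N ->
  subseq (prefix_blocks blk m) (prefix_blocks blk n).
Proof.
move/subnK => <-; elim: (n - m)%N => [|d IH]; first by rewrite add0n.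
by rewrite addSn pb_S (subseq_trans IH) // prefix_subseq.
Qed.

Lemma mem_pb (blk : nat -> seq int) m M x : (m <= M)%N -> x \in blk m ->
  x \in prefix_blocks blk M.
Proof.
move=> HmM Hx; apply/flatten_mapP; exists m => //.
by rewrite mem_iota add0n ltnS HmM.
Qed.

Definition TP k s i m j : seq int :=
  flatten [seq Tseq k s i (odd q) | q <- iota (2 * m) (j - 2 * m).+1].

Lemma TP_S k s i m j : (2 * m <= j)%N ->
  TP k s i m j.+1 = TP k s i m j ++ Tseq k s i (odd j.+1).
Proof.
move=> H; rewrite /TP subSn //.
have -> : iota (2 * m) (j - 2 * m).+2 = iota (2 * m) (j - 2 * m).+1 ++ [:: j.+1].
  rewrite (_ : (j - 2 * m).+2 = ((j - 2 * m).+1 + 1)%N); last by rewrite addn1.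
  rewrite iotaD; congr (_ ++ _); rewrite (_ : (2 * m + (j - 2 * m).+1)%N = j.+1) //; lia.
by rewrite map_cat flatten_cat /= cats0.
Qed.

Lemma TP_0 k s i m : TP k s i m (2 * m) = Tseq k s i false.
Proof. by rewrite /TP subnn /= cats0 mul2n odd_double. Qed.

Lemma high_T k s i b : all (fun v => ~~ (v <= 2 * s)) (Tseq k s i b).
Proof.
apply/allP => v /mapP [x]; rewrite mem_filter mem_iota => /andP[_ /andP[Hx _]] ->.
rewrite -ltNge; lia.
Qed.

Lemma struct_lemma k s (a : nat -> seq int) i M :
  (forall m, (m <= M)%N -> all (fun v => v <= s) (a m)) ->
  forall j, (j./2 <= M)%N -> forall l h,
  all (fun v => v <= 2 * s) l -> all (fun v => ~~ (v <= 2 * s)) h ->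
  subseq (l ++ h) (prefix_blocks (beta k s a i) j) ->
  exists m', [/\ (m' <= j./2)%N, subseq l (inflate (prefix_blocks a m'))
                & subseq h (TP k s i m' j)].
Proof.
move=> Ha.
have lowI : forall m, (m <= M)%N -> all (fun v => v <= 2 * s) (inflate (a m)).
  move=> m /Ha /allP Hm; rewrite all_inflate; apply/allP => v /Hm Hv.
  apply/andP; split; lia.
pose lowp := (fun v : int => v <= 2 * s).
elim=> [|j IH] HjM l h Hl Hh.
  rewrite pb_0 /beta /= => H.
  have [H1 H2] := subseq_split_lh (p := lowp) Hl Hh (lowI 0%N HjM) (high_T k s i false) H.
  exists 0%N; split => //.
    by rewrite pb_0.
  by rewrite (TP_0 k s i 0).
rewrite pb_S => /subseq_catP [s1 [s2 [E [H1 H2]]]].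
have HjM' : (j./2 <= M)%N.
  by apply: leq_trans HjM; rewrite -!divn2 leq_div2r.
case: (cat_eq_split E) => [[e [Es1 Eh]]|[e [ne [El Es2]]]].
-
  subst s1; have He : all (fun v => ~~ (v <= 2 * s)) e.
    by move: Hh; rewrite Eh all_cat => /andP[].
  have [m' [Hm' Hl' He']] := IH HjM' l e Hl He H1.
  have Hs2 : all (fun v => ~~ (v <= 2 * s)) s2.
    by move: Hh; rewrite Eh all_cat => /andP[].
  have H2' : subseq s2 (Tseq k s i (odd j.+1)).
    move: H2; rewrite /beta; case Hodd: (odd j.+1) => // H2.
    have := subseq_split_lh (p := lowp) (l := [::]) (isT : all lowp [::]) Hs2
      (lowI _ HjM) (high_T k s i false) H2.
    by case.
  exists m'; split.
  + by apply: leq_trans Hm' _; rewrite -!divn2 leq_div2r.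
  + done.
  + have Hjm : (2 * m' <= j)%N.
      by move: Hm'; rewrite -divn2 leq_divRL // mulnC.
    by rewrite Eh (TP_S k s i Hjm) cat_subseq.
- (* the block j.+1 contains low elements: it is even *)
  have Hs1 : all (fun v => v <= 2 * s) s1 by move: Hl; rewrite El all_cat => /andP[].
  have He : all (fun v => v <= 2 * s) e by move: Hl; rewrite El all_cat => /andP[].
  case Hodd: (odd j.+1).
    exfalso; move: H2; rewrite /beta Hodd Es2 => H2.
    case: e El ne He Es2 H2 => [|v e] // _ _ /andP[Hv _] _ /(mem_subseq) /(_ v (mem_head _ _)).
    by move/(allP (high_T k s i true)); rewrite Hv.
  have [j2 Ej] : exists j2, j.+1 = (2 * j2.+1)%N.
    have Hoj : odd j by move: Hodd => /=; case: (odd j).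
    have := odd_double_half j; rewrite Hoj -mul2n => Hj.
    by exists j./2; lia.
  have Ej2 : (j.+1)./2 = j2.+1 by rewrite Ej -divn2 mulKn.
  move: H2; rewrite /beta Hodd Ej2 Es2 => H2.
  have [He2 Hh2] := subseq_split_lh (p := lowp) He Hh
    (lowI _ (leq_trans (eq_leq (esym Ej2)) HjM)) (high_T k s i false) H2.
  have [m'' [Hm'' Hs1' _]] : exists m'', [/\ (m'' <= j./2)%N,
      subseq s1 (inflate (prefix_blocks a m'')) & subseq [::] (TP k s i m'' j)].
    by apply: IH => //; rewrite cats0.
  exists j2.+1; split.
  + by [].
  + rewrite El pb_S inflate_cat cat_subseq //.
    apply: subseq_trans Hs1' _; apply: inflate_subseq; apply: pb_mono.
    by apply: leq_trans Hm'' _; move: Ej; rewrite -divn2; lia.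
  + by rewrite Ej TP_0.
Qed.

Local Close Scope ring_scope.

Lemma sorted_subset_subseq (X Y : seq nat) : sorted ltn X -> sorted ltn Y ->
  {subset X <= Y} -> subseq X Y.
Proof.
move=> sX sY sub.
have uY := sorted_uniq ltn_trans ltnn sY.
apply/(subseq_uniqP uY).
apply: (irr_sorted_eq ltn_trans ltnn) => //.
  exact: sorted_filter ltn_trans _ _ sY.
by move=> x; rewrite mem_filter; case E: (x \in X) => //=; rewrite (sub x E).
Qed.

Lemma sorted_Tn k i b : sorted ltn (Tn k i b).
Proof. exact: sorted_filter ltn_trans _ _ (iota_ltn_sorted _ _). Qed.

(* the high part of the lower bound construction *)
Lemma Xseq_sub k (r : nat -> bool) i : (i < k)%N ->
  let T := [seq t <- iota 0 k | r t] in
  let X := [seq xs r t.+1 | t <- T] in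
  sorted ltn X /\
  subseq X (if r i then Tn k i false ++ Tn k i true else Tn k i false).
Proof.
move=> Hik T X.
have sT : sorted ltn T by exact: sorted_filter ltn_trans _ _ (iota_ltn_sorted _ _).
have homo : {in r &, {homo (fun t => xs r t.+1) : x y / (x < y)%N >-> (x < y)%N}}.
  move=> t t' _ Ht' Htt'.
  apply: (leq_trans (xs_lt r t.+1)); apply: (leq_trans _ (xs_ge Ht')).
  by rewrite leq_exp2l.
have sX : forall T', subseq T' T -> sorted ltn [seq xs r t.+1 | t <- T'].
  move=> T' HT'; apply: (homo_sorted_in homo).
    by apply/allP => t /(mem_subseq HT'); rewrite mem_filter => /andP[].
  exact: (subseq_sorted ltn_trans HT' sT).
have inTn : forall t b, t \in T -> bitn i (xs r t.+1) = b ->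
    xs r t.+1 \in Tn k i b.
  move=> t b; rewrite mem_filter mem_iota add0n => /andP[Hr /andP[_ Htk]] Hb.
  rewrite mem_filter mem_iota; apply/andP; split; first by apply/eqP; exact: Hb.
  have h1 := xs_ge Hr; have h2 := xs_lt r t.+1.
  have h3 : (2 ^ t.+1 <= 2 ^ k)%N by rewrite leq_exp2l.
  have h4 : (0 < 2 ^ t)%N by rewrite expn_gt0.
  apply/andP; split; lia.
split; first exact: sX.
case Hri: (r i).
  have ET : T = [seq t <- iota 0 i | r t] ++ [seq t <- iota i (k - i) | r t].
    by rewrite /T -filter_cat -{1}(subnKC (ltnW Hik)) iotaD.
  rewrite /X ET map_cat; apply: cat_subseq.
    apply: sorted_subset_subseq (sX _ _) (sorted_Tn _ _ _) _.
      by rewrite ET prefix_subseq.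
    move=> x /mapP [t Ht ->]; apply: inTn.
      by rewrite ET mem_cat Ht.
    by rewrite bit_xs; move: Ht; rewrite mem_filter mem_iota => /andP[_ /andP[_ Hti]];
      rewrite add0n in Hti; rewrite ltnS leqNgt Hti.
  apply: sorted_subset_subseq (sX _ _) (sorted_Tn _ _ _) _.
    by rewrite ET suffix_subseq.
  move=> x /mapP [t Ht ->]; apply: inTn.
    by rewrite ET mem_cat Ht orbT.
  by rewrite bit_xs Hri andbT; move: Ht; rewrite mem_filter mem_iota => /andP[_ /andP[Hit _]];
    rewrite ltnS.
apply: sorted_subset_subseq (sX _ (subseq_refl _)) (sorted_Tn _ _ _) _.
move=> x /mapP [t Ht ->]; apply: inTn => //.
by rewrite bit_xs Hri andbF.
Qed.

Local Open Scope ring_scope.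

Lemma TseqE k s i b : Tseq k s i b = map (fun x : nat => 2 * s + x%:Z) (Tn k i b).
Proof. by []. Qed.

Lemma lb_sub k s (a : nat -> seq int) i m :
  subseq (inflate (prefix_blocks a m) ++ Tseq k s i false)
         (prefix_blocks (beta k s a i) (2 * m)).
Proof.
elim: m => [|m IH]; first by rewrite !pb_0 /beta /=.
rewrite (_ : (2 * m.+1 = (2 * m).+1.+1)%N); last by lia.
rewrite !pb_S (_ : beta k s a i (2 * m).+2 = inflate (a m.+1) ++ Tseq k s i false);
  last first.
  rewrite /beta (_ : ((2 * m).+2)./2 = m.+1); last by rewrite -divn2; lia.
  by rewrite (_ : odd (2 * m).+2 = false) //= oddM.
rewrite (_ : beta k s a i (2 * m).+1 = Tseq k s i true); last by rewrite /beta /= oddM.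
rewrite inflate_cat -catA; apply: cat_subseq; last exact: subseq_refl.
apply: subseq_trans (subseq_trans (prefix_subseq _ _) IH) _.
exact: prefix_subseq.
Qed.

Lemma pb_odd k s (a : nat -> seq int) i m :
  prefix_blocks (beta k s a i) (2 * m).+1 =
  prefix_blocks (beta k s a i) (2 * m) ++ Tseq k s i true.
Proof. by rewrite pb_S /beta /= oddM. Qed.

Lemma sorted_cat_lh (c : int) (u w : seq int) : sorted <%R u -> sorted <%R w ->
  all (fun v => v <= c) u -> all (fun v => ~~ (v <= c)) w -> sorted <%R (u ++ w).
Proof.
case: u => [|x u] // su sw Hu Hw.
rewrite cat_cons /= cat_path; move: su => /= -> /=.
case: w sw Hw => [|y w] //= sw /andP[Hy _]; rewrite sw andbT.
have : last x u <= c by apply: (allP Hu); rewrite mem_last.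
by move: Hy; rewrite -ltNge => Hy H; apply: le_lt_trans H Hy.
Qed.

Lemma split_sorted (c : int) (S : seq int) : sorted <%R S ->
  S = filter (fun v => v <= c) S ++ filter (predC (fun v => v <= c)) S.
Proof.
elim: S => [|x S IH] //= HS.
have sS := path_sorted HS.
case: ifP => Hx /=; first by rewrite -(IH sS).
have Hall : all (predC (fun v => v <= c)) S.
  apply/allP => v /(allP (order_path_min lt_trans HS)) Hv /=.
  by move: Hx Hv => /negbT; rewrite -ltNge; lia.
by rewrite filter_all_nil // (all_filterP Hall).
Qed.

Definition xv (s : int) (v : int) : nat := absz ((v - 2 * s)%R).

Lemma path_xv s (h : seq int) p : path <%R p h -> 2 * s <= p ->
  path ltn (xv s p) (map (xv s) h).
Proof.
elim: h p => [|y h IH] p //= /andP[Hpy Hh] Hp.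
rewrite IH ?andbT //; last by lia.
rewrite /xv; lia.
Qed.

Lemma map_xv_Tseq k s i b : map (xv s) (Tseq k s i b) = Tn k i b.
Proof.
rewrite TseqE -map_comp; apply: map_id_in => x _ /=; rewrite /xv; lia.
Qed.

Lemma map_xv_TP k s i m j : map (xv s) (TP k s i m j) =
  flatten [seq Tn k i b | b <- [seq odd q | q <- iota (2 * m) (j - 2 * m).+1]].
Proof.
rewrite /TP map_flatten -!map_comp; congr flatten; apply: eq_map => q /=.
exact: map_xv_Tseq.
Qed.

Unset Implicit Arguments. Set Strict Implicit.
Local Open Scope ring_scope.

Lemma size_inflate (c : seq int) : size (inflate c) = (2 * size c)%N.
Proof. by elim: c => // a c IH; rewrite inflate_cons /= IH; lia. Qed.

Theorem lemma13 (k N : nat) (alpha : 'I_k -> nat -> seq int) (s : int) :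
  (2 <= k)%N ->
  (exists e : nat, N = (2 ^ e)%N) ->
  (forall js : 'I_k -> nat, (forall i, (js i < N)%N) ->
     lcis_is [seq prefix_blocks (alpha i) (js i) | i <- enum 'I_k]
             (\sum_(i < k) js i + N)%N) ->
  (* s is the largest element appearing in A_1, ..., A_k *)
  (exists i : 'I_k, s \in prefix_blocks (alpha i) N.-1) ->
  (forall (i : 'I_k) (x : int), x \in prefix_blocks (alpha i) N.-1 -> x <= s) ->
  forall js : 'I_k -> nat, (forall i, (js i < 2 * N)%N) ->
     lcis_is [seq prefix_blocks (beta k s (alpha i) i) (js i) | i <- enum 'I_k]
             (\sum_(i < k) js i + 2 * N)%N.
Proof.
move=> Hk [e HN] Hyp [i0 Hi0] Hmax js Hjs.
have N_gt0 : (0 < N)%N by rewrite HN expn_gt0.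
have Hmax' : forall (i : 'I_k) m, (m <= N.-1)%N -> all (fun v => v <= s) (alpha i m).
  by move=> i m Hm; apply/allP => x Hx; apply: (Hmax i); exact: mem_pb Hm Hx.
split.
-
  pose mi := fun i : 'I_k => ((js i)./2)%N.
  have Hmi : forall i, (mi i < N)%N.
    by move=> i; rewrite /mi -divn2; have := Hjs i; lia.
  have [[c [[Hcs Hcsub] Hcsize]] _] := Hyp mi Hmi.
  have Hc : forall i : 'I_k, subseq c (prefix_blocks (alpha i) (mi i)).
    move=> i; move/allP: Hcsub; apply; apply/mapP; exists i => //.
    by rewrite mem_enum.
  pose r := fun t : nat => if (insub t : option 'I_k) is Some i then odd (js i) else false.
  have rE : forall i : 'I_k, r i = odd (js i) by move=> i; rewrite /r valK.
  pose T := [seq t <- iota 0 k | r t].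
  pose X := [seq xs r t.+1 | t <- T].
  pose H := map (fun x : nat => 2 * s + x%:Z) X.
  exists (inflate c ++ H); split; first split.
  + apply: (sorted_cat_lh (c := 2 * s)).
    * exact: sorted_inflate.
    * have [sX _] := Xseq_sub r (ltn_ord i0).
      have hom : {homo (fun x : nat => 2 * s + x%:Z) : x y / (x < y)%N >-> x < y} by move=> x y; lia.
      exact: (homo_sorted hom X sX).
    * rewrite all_inflate; apply/allP => a Ha.
      have : a <= s.
        have Hm0 : (mi i0 <= N.-1)%N by have := Hmi i0; lia.
        apply: (Hmax i0).
        exact: (mem_subseq (@pb_mono (alpha i0) _ _ Hm0) (mem_subseq (Hc i0) Ha)).
      by move=> Has; apply/andP; split; lia.
    * apply/allP => v /mapP [x /mapP [t Ht ->] ->].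
      have Hrt : r t by move: Ht; rewrite mem_filter => /andP[].
      have := xs_ge Hrt; have := expn_gt0 2 t; rewrite -ltNge; lia.
  + rewrite all_map; apply/allP => i _ /=.
    have Ej : js i = (2 * mi i + odd (js i))%N.
      by have := odd_double_half (js i); rewrite -mul2n /mi; lia.
    have [_ HX] := Xseq_sub r (ltn_ord i).
    rewrite rE in HX.
    case Ho : (odd (js i)) in Ej HX.
    * rewrite Ej addn1 pb_odd.
      apply: subseq_trans (cat_subseq (lb_sub k s (alpha i) i (mi i)) (subseq_refl (Tseq k s i true))).
      rewrite -catA; apply: cat_subseq; first exact: inflate_subseq.
      by rewrite !TseqE -map_cat; apply: map_subseq.
    * rewrite Ej addn0.
      apply: subseq_trans (lb_sub k s (alpha i) i (mi i)).
      apply: cat_subseq; first exact: inflate_subseq.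
      by rewrite !TseqE; apply: map_subseq.
  + rewrite size_cat size_inflate Hcsize !size_map size_filter.
    have -> : count r (iota 0 k) = (\sum_(i < k) odd (js i))%N.
      rewrite -sum1_count (_ : iota 0 k = index_iota 0 k); last by rewrite /index_iota subn0.
      rewrite big_mkord big_mkcond; apply: eq_bigr => i _.
      by rewrite rE; case: (odd (js i)).
    have -> : (\sum_(i < k) js i = 2 * \sum_(i < k) mi i + \sum_(i < k) odd (js i))%N.
      rewrite big_distrr -big_split; apply: eq_bigr => i _.
      by rewrite /mi -[in LHS](odd_double_half (js i)) -mul2n addnC.
    lia.
-
  move=> S [HS Hsub].
  have Hsub' : forall i : 'I_k, subseq S (prefix_blocks (beta k s (alpha i) i) (js i)).
    move=> i; move: Hsub; rewrite all_map => /allP; apply.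
    by rewrite mem_enum.
  pose lowp := fun v : int => v <= 2 * s.
  pose l := filter lowp S.
  pose h := filter (predC lowp) S.
  have ES : S = l ++ h := split_sorted (2 * s) HS.
  have Hl : all lowp l := filter_all _ _.
  have Hh : all (predC lowp) h := filter_all _ _.
  have sl : sorted <%R l := sorted_filter lt_trans _ HS.
  have sh : sorted <%R h := sorted_filter lt_trans _ HS.
  have [mp Hmp] : exists mp : 'I_k -> nat, forall i,
      [/\ (mp i <= (js i)./2)%N, subseq l (inflate (prefix_blocks (alpha i) (mp i)))
        & subseq h (TP k s i (mp i) (js i))].
    apply: (@fin_all_exists _ (fun _ => nat) (fun i m =>
      [/\ (m <= (js i)./2)%N, subseq l (inflate (prefix_blocks (alpha i) m))
        & subseq h (TP k s i m (js i))])) => i.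
    apply: (@struct_lemma k s (alpha i) i N.-1 (Hmax' i) (js i)) => //.
      by rewrite -divn2; have := Hjs i; lia.
    by rewrite -ES; exact: Hsub' i.
  have Hmp_lt : forall i, (mp i < N)%N.
    by move=> i; have [+ _ _] := Hmp i; rewrite -divn2; have := Hjs i; lia.
  have Hmp2 : forall i, (2 * mp i <= js i)%N.
    by move=> i; have [+ _ _] := Hmp i; rewrite -divn2; lia.
  pose c := undup (map hf l).
  have Hcsz : (size c <= \sum_(i < k) mp i + N)%N.
    apply: ((Hyp mp Hmp_lt).2 c); split; first exact: sorted_hf.
    rewrite all_map; apply/allP => i _ /=.
    by have [_ Hi _] := Hmp i; exact: undup_hf_subseq.
  have Hlc := size_hf sl.
  pose Xh := map (xv s) h.
  have Hch : forall i : 'I_k, (chgn i 0 Xh <= js i - 2 * mp i)%N.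
    move=> i; have [_ _ Hh'] := Hmp i.
    have := map_subseq (xv s) Hh'; rewrite map_xv_TP => /(chgn_Tn 0%N).
    by rewrite /bitn div0n (_ : odd 0 = false) // chgb_alt0.
  have Hsize_h : (size h <= \sum_(i < k) chgn i 0 Xh)%N.
    rewrite -(size_map (xv s)); apply: size_le_chg.
      have Hp : path <%R (2 * s) h.
        by rewrite path_min_sorted //; apply/allP => v /(allP Hh) /=; rewrite -ltNge.
      have := path_xv Hp (lexx _).
      by rewrite /xv subrr.
    rewrite /= expn_gt0 /=; apply/allP => x Hx.
    have [_ _ Hh'] := Hmp i0.
    move: (mem_subseq (map_subseq (xv s) Hh') Hx); rewrite map_xv_TP.
    case/flatten_mapP => b _; rewrite mem_filter mem_iota => /andP[_ /andP[_ Hx2]].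
    by have := expn_gt0 2 k; lia.
  have Hsum : (\sum_(i < k) (js i - 2 * mp i) + 2 * \sum_(i < k) mp i
               = \sum_(i < k) js i)%N.
    rewrite big_distrr -big_split /=; apply: eq_bigr => i _ /=; rewrite subnK //; exact: Hmp2.
  have Hh2 : (size h <= \sum_(i < k) (js i - 2 * mp i))%N.
    apply: (leq_trans Hsize_h); apply: leq_sum => i _; exact: Hch.
  rewrite ES size_cat.
  move: Hlc; rewrite -/c => Hlc; lia.
Qed.
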